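(* In the setting below, if $g(x)$ is self-reciprocal, then $\gcd(t_{22}(x),g_{12}(x))=1$ if and only if $\gcd\big(t_{22}(x),\ g_{11}(x)\bar g_{11}(x)+g_{12}(x)\bar g_{12}(x)\big)=1$.
   Context: Let $q$ be a prime power, $F=\mathbb{F}_q$, $m\ge1$ with $\gcd(q,m)=1$. For a nonzero polynomial $f$ of degree $k$, $f^*(x)=x^kf(x^{-1})$; $f$ is self-reciprocal if $f^*=\alpha f$ for some $\alpha\in F$. For a polynomial $f$ of degree at most $m$, $\bar f(x)=x^m f(x^{-1})$. Let $g_{11},g_{12}\in F[x]$ with $g_{11}\mid x^m-1$ and $\deg g_{12}<m$ (so that $(g_{11},g_{12})$ generates a one-generator quasi-cyclic code of index 2 in $(F[x]/\langle x^m-1\rangle)^2$). Let $g=\gcd(g_{11},g_{12})$, $g_{11}=g\,g_{11}'$, $g_{22}=(x^m-1)/g_{11}'$, $g_{22}=g\,g_{22}'$, $r_{22}=\gcd(g_{22}',g_{22}'^* )$, $t_{22}=g_{22}'/r_{22}$. *)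

(* Defs.v *)
From mathcomp Require Import all_boot all_order all_algebra all_field.
Set Implicit Arguments. Unset Strict Implicit. Unset Printing Implicit Defensive.
Import GRing.Theory.
Local Open Scope ring_scope.

(* Reciprocal polynomial f^*(x) = x^k f(1/x), k = deg f = (size f).-1 :
   coefficient i of f^* is coefficient k - i of f. *)
Definition recip {R : nzRingType} (f : {poly R}) : {poly R} :=
  \poly_(i < size f) f`_((size f).-1 - i).

Definition self_reciprocal {R : nzRingType} (f : {poly R}) : Prop :=
  f != 0 /\ exists alpha : R, recip f = alpha *: f.

(* bar f (x) = x^m f(1/x), for deg f <= m. *)
Definition barp {R : nzRingType} (m : nat) (f : {poly R}) : {poly R} :=
  \poly_(i < m.+1) f`_(m - i).

(* Main.v *)
Require Import Defs.
From mathcomp Require Import all_boot all_order all_algebra all_field.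
Import GRing.Theory.
Local Open Scope ring_scope.

Lemma natm_neq0 (F : finFieldType) (m : nat) : coprime #|F| m -> m%:R != 0 :> F.
Proof.
move=> cop; have [p pp pc] := finPcharP F.
have hc := card_pprimeChar pc.
rewrite -(dvdn_pcharf pc); apply/negP => pm.
have h1 : (1 < #|F|)%N by apply: finNzRing_gt1.
have pF : (p %| #|F|)%N.
  move: hc; set n := logn _ _ => hc.
  case: n hc => [|n] hc; first by move: h1; rewrite [#|F|]hc.
  by rewrite [#|F|]hc dvdn_exp.
have := coprime_dvdr pm (coprime_dvdl pF cop).
by rewrite /coprime gcdnn => /eqP h; move: (prime_gt1 pp); rewrite h.
Qed.

Lemma barp_horner (K : fieldType) n (f : {poly K}) x :
  (size f <= n.+1)%N -> x != 0 -> (barp n f).[x] = x ^+ n * f.[x^-1].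
Proof.
move=> hs x0; rewrite /barp horner_poly (horner_coef_wide _ hs) mulr_sumr.
rewrite (reindex_inj rev_ord_inj) /=; apply: eq_bigr => i _.
have hi : (i <= n)%N by rewrite -ltnS.
rewrite subSS subKn // exprB ?unitfE // exprVn.
by rewrite mulrCA mulrC.
Qed.

Lemma recip_barp (R : nzRingType) (f : {poly R}) : recip f = barp (size f).-1 f.
Proof.
apply/polyP => i; rewrite /recip /barp !coef_poly.
case sf: (size f) => [|s] //=.
by case: ifP => _ //; rewrite nth_default // sf.
Qed.

Lemma barp_map (R S : nzRingType) (h : {rmorphism R -> S}) n (f : {poly R}) :
  map_poly h (barp n f) = barp n (map_poly h f).
Proof.
apply/polyP => i; rewrite coef_map /= !coef_poly; case: ifP => _; rewrite ?coef_map ?rmorph0 //.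
case: ifP => // /negbT; rewrite -leqNgt => hh; by rewrite nth_default // rmorph0.
Qed.

Lemma recip_map (F : fieldType) (R : nzRingType) (h : {rmorphism F -> R}) (f : {poly F}) :
  map_poly h (recip f) = recip (map_poly h f).
Proof. by rewrite !recip_barp size_map_inj_poly ?barp_map //; [exact: fmorph_inj | rewrite rmorph0]. Qed.

Lemma recip_horner (K : fieldType) (f : {poly K}) x :
  x != 0 -> (recip f).[x] = x ^+ (size f).-1 * f.[x^-1].
Proof.
move=> x0; rewrite recip_barp barp_horner //; case: (size f) => //.
Qed.

Lemma recip_neq0 (R : nzRingType) (f : {poly R}) : f != 0 -> recip f != 0.
Proof.
move=> fz; apply/eqP => /(congr1 (fun p : {poly R} => p`_0)).
rewrite /recip coef_poly size_poly_gt0 fz coef0 subn0 => /eqP.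
by rewrite -lead_coefE lead_coef_eq0 (negbTE fz).
Qed.

Lemma coprime_roots (F : fieldType) (K : closedFieldType) (h : {rmorphism F -> K})
  (a b : {poly F}) :
  coprimep a b <-> forall x, root (map_poly h a) x -> ~~ root (map_poly h b) x.
Proof.
rewrite -(coprimep_map h); split.
  by move=> cop x ra; exact: (coprimep_root cop ra).
move=> H; rewrite /coprimep; apply/negPn/negP => /closed_rootP [x].
by rewrite root_gcd => /andP [ra rb]; move: (H x ra); rewrite rb.
Qed.

Lemma nosq (F : fieldType) (K : fieldType) (h : {rmorphism F -> K}) m
  (a b : {poly F}) x :
  m%:R != 0 :> F -> a * b %| 'X^m - 1 -> root (map_poly h a) x -> root (map_poly h b) x -> False.
Proof.
move=> m0 dab ra rb.
have e : map_poly h ('X^m - 1 : {poly F}) = 'X^m - 1 by rewrite rmorphB /= map_polyXn rmorph1.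
have d2 : ('X - x%:P) * ('X - x%:P) %| 'X^m - 1.
  rewrite -e; apply: dvdp_trans (_ : map_poly h (a * b) %| _); last by rewrite dvdp_map.
  by rewrite rmorphM dvdp_mul // dvdp_XsubCl.
have mK : m%:R != 0 :> K by rewrite -(rmorph_nat h) fmorph_eq0.
have mpos : (0 < m)%N by rewrite lt0n; apply: contraNneq m0 => ->.
have x0 : x != 0.
  have : root ('X^m - 1) x by apply: (root_dvdp d2); rewrite rootM root_XsubC eqxx.
  by apply: contraTneq => ->; rewrite rootE !hornerE expr0n eqn0Ngt mpos /= sub0r oppr_eq0 oner_eq0.
case/dvdpP: d2 => q eq.
have := congr1 (fun p : {poly K} => (p^`()).[x]) eq => /=.
rewrite derivB derivXn derivC subr0 !derivM derivXsubC !hornerE subrr /= !mulr0 add0r. rewrite (_ : 0 + x - x = 0); last by rewrite add0r subrr. rewrite mulr0 hornerMn hornerXn.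
move/eqP; rewrite -mulr_natl mulf_eq0 (negbTE mK) /= expf_eq0 (negbTE x0) andbF //.
Qed.

Theorem lemma4p1 (F : finFieldType) (m : nat) (g11 g12 : {poly F}) :
  (0 < m)%N -> coprime #|F| m ->
  g11 %| 'X^m - 1 -> (size g12 <= m)%N ->
  let g := gcdp g11 g12 in
  let g11' := g11 %/ g in
  let g22 := ('X^m - 1) %/ g11' in
  let g22' := g22 %/ g in
  let r22 := gcdp g22' (recip g22') in
  let t22 := g22' %/ r22 in
  self_reciprocal g ->
  (coprimep t22 g12 <->
   coprimep t22 (g11 * barp m g11 + g12 * barp m g12)).
Proof.
move=> m0 cop hdv hsz g g11' g22 g22' r22 t22 [gnz [c hc]].
have mF := @natm_neq0 F m cop.
set P := ('X^m - 1 : {poly F}).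
have Pnz : P != 0.
  apply/negP => /eqP eP; have := congr1 (fun p : {poly F} => p.[0]) eP.
  rewrite /= /P !hornerE expr0n eqn0Ngt m0 /= sub0r => /eqP.
  by rewrite oppr_eq0 oner_eq0.
have hdvP : g11 %| P := hdv.
have g11nz : g11 != 0 by apply: contraNneq Pnz => e; move: hdvP; rewrite e dvd0p.
set Q := P %/ g11.
have hQ : Q * g11 = P by rewrite divpK.
have gdv : g %| g11 by rewrite dvdp_gcdl.
have hg11' : g11' * g = g11 by rewrite divpK.
have g11'nz : g11' != 0 by apply: contraNneq g11nz => e; rewrite -hg11' e mul0r.
have hg22 : g22 = g * Q by rewrite (_ : g22 = P %/ g11') // -hQ -hg11' mulrCA mulKp // mulrC.
have hG : g22' = Q by rewrite /g22' hg22 mulKp.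
have rdG : r22 %| g22' by rewrite dvdp_gcdl.
have htr : t22 * r22 = Q by rewrite divpK // -hG.
have QP : Q %| P by rewrite -hQ dvdp_mulr.
have [K [h _]] := countable_algebraic_closure F.
have CR := @coprime_roots F K h.
suff key : forall x, root (map_poly h t22) x ->
   root (map_poly h g12) x = root (map_poly h (g11 * barp m g11 + g12 * barp m g12)) x.
  by split=> H1; apply/CR => x rt; have := proj1 (CR _ _) H1 x rt; rewrite key.
move=> x rt.
have rdv : forall a b, a %| b -> root (map_poly h a) x -> root (map_poly h b) x.
  by move=> a b dab; apply: root_dvdp; rewrite dvdp_map.
have rQ : root (map_poly h Q) x by apply: (rdv t22); rewrite // -htr dvdp_mulr.
have rr : ~~ root (map_poly h r22) x.
  apply/negP => rr; apply: (@nosq F K h m t22 r22 x mF _ rt rr); by rewrite htr.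
have eP : map_poly h P = 'X^m - 1 by rewrite rmorphB /= map_polyXn rmorph1.
have xm : x ^+ m = 1.
  have := rdv _ _ QP rQ; rewrite eP rootE !hornerE => /eqP /eqP.
  by rewrite subr_eq0 => /eqP.
have x0 : x != 0 by apply: contra_eq_neq xm => ->; rewrite expr0n eqn0Ngt m0 eq_sym oner_eq0.
set y := x^-1.
have yx : y^-1 = x by rewrite /y invrK.
have y0 : y != 0 by rewrite invr_eq0.
have ym : y ^+ m = 1 by rewrite /y exprVn xm invr1.
have rPy : root (map_poly h P) y by rewrite eP rootE !hornerE ym subrr.
have rg11y : root (map_poly h g11) y.
  move: rPy; rewrite -hQ rmorphM /= rootM => /orP [rQy|//].
  exfalso; move/negP: rr; apply.
  rewrite /r22 gcdp_map root_gcd hG rQ /= recip_map rootE recip_horner // -/y.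
  by move: rQy; rewrite rootE => /eqP ->; rewrite mulr0.
have s11 : (size (map_poly h g11) <= m.+1)%N.
  rewrite size_map_inj_poly ?rmorph0 //; last exact: fmorph_inj.
  have := dvdp_leq Pnz hdv; rewrite /P size_XnsubC //.
have s12 : (size (map_poly h g12) <= m.+1)%N.
  rewrite size_map_inj_poly ?rmorph0 //; last exact: fmorph_inj.
  exact: leqW.
rewrite rmorphD !rmorphM /= !barp_map !rootE hornerD !hornerM (@barp_horner K m _ x s11 x0) -/y.
move: (rg11y); rewrite rootE => /eqP ->; rewrite !mulr0 add0r (@barp_horner K m _ x s12 x0) -/y xm mul1r.
rewrite mulf_eq0.
case: (boolP (_ == 0)) => //= _; apply/esym/negP => /eqP r12y.
have rgy : root (map_poly h g) y by rewrite /g gcdp_map root_gcd rg11y rootE r12y eqxx.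
have rgx : root (map_poly h g) x.
  have : root (map_poly h (recip g)) x.
    by rewrite recip_map rootE recip_horner // -/y; move: rgy; rewrite rootE => /eqP ->; rewrite mulr0.
  rewrite hc map_polyZ rootE hornerZ mulf_eq0 fmorph_eq0 => /orP [/eqP c0|//].
  by move: (@recip_neq0 _ g gnz); rewrite hc c0 scale0r eqxx.
apply: (@nosq F K h m g11 Q x mF _ (rdv _ _ gdv rgx) rQ).
by rewrite mulrC hQ.
Qed.
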